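(* Let $\mathcal H$ be a well-structured preconditioner set. For all $M_1,M_2\in\mathcal S^d_{++}$, $P_{\mathcal H}(M_1+M_2)^2=P_{\mathcal H}(M_1)^2+P_{\mathcal H}(M_2)^2$; for every $M\in\mathcal S^d_{++}$ and $c>0$, $P_{\mathcal H}(cM)^2=cP_{\mathcal H}(M)^2$; and for all $A,B\in\mathcal S^d_{++}$ with $A\preceq B$, $P_{\mathcal H}(A)\preceq P_{\mathcal H}(B)$.
   Context: $\mathcal S^d_+$ (resp. $\mathcal S^d_{++}$) denotes the set of real symmetric positive semidefinite (resp. positive definite) $d\times d$ matrices; $\langle A,B\rangle=\operatorname{Tr}(A^\top B)$. A set $\mathcal H\subseteq\mathcal S_+^d$ is a well-structured preconditioner set if $\mathcal H=\mathcal S_+^d\cap\mathcal K$ for some set $\mathcal K$ of real $d\times d$ matrices that is closed under scalar multiplication, matrix addition and matrix multiplication and contains the identity $I_d$. For $M\in\mathcal S^d_{++}$, $P_{\mathcal H}(M):=\arg\min_{H\in\mathcal H\cap\mathcal S^d_{++}}\langle M,H^{-1}\rangle+\operatorname{Tr}(H)$ (the minimizer exists and is unique). *)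

(* Defs.v *)
From mathcomp Require Import all_boot all_order all_algebra.
From mathcomp Require Import boolp classical_sets reals.
Set Implicit Arguments. Unset Strict Implicit. Unset Printing Implicit Defensive.
Import Order.TTheory GRing.Theory Num.Theory.
Local Open Scope ring_scope.
Local Open Scope classical_set_scope.

Section Defs.
Variables (R : realType) (d : nat).

Definition psd (A : 'M[R]_d) : Prop :=
  A^T = A /\ forall v : 'rV[R]_d, 0 <= (v *m A *m v^T) 0 0.

Definition pd (A : 'M[R]_d) : Prop :=
  A^T = A /\ forall v : 'rV[R]_d, v != 0 -> 0 < (v *m A *m v^T) 0 0.

Definition loewner_le (A B : 'M[R]_d) : Prop := psd (B - A).

Definition frob (A B : 'M[R]_d) : R := \tr (A^T *m B).

Definition matrix_algebra_set (K : 'M[R]_d -> Prop) : Prop :=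
  [/\ forall (c : R) A, K A -> K (c *: A),
      forall A B, K A -> K B -> K (A + B),
      forall A B, K A -> K B -> K (A *m B)
    & K 1%:M].

Definition precond_set (K : 'M[R]_d -> Prop) (H : 'M[R]_d) : Prop :=
  psd H /\ K H.

Definition precond_obj (M H : 'M[R]_d) : R := frob M (invmx H) + \tr H.

Definition is_PH (K : 'M[R]_d -> Prop) (M H : 'M[R]_d) : Prop :=
  (precond_set K H /\ pd H) /\
  forall H', precond_set K H' -> pd H' -> precond_obj M H <= precond_obj M H'.

(* P_H(M): the (unique, existing) minimizer, picked by classical choice *)
Definition PH (K : 'M[R]_d -> Prop) (M : 'M[R]_d) : 'M[R]_d :=
  xget 0 [set H | is_PH K M H].

End Defs.

(* Main.v *)
Require Import Defs.
From mathcomp Require Import all_boot all_order all_algebra.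
From mathcomp Require Import boolp classical_sets reals.
From mathcomp Require Import spectral sesquilinear mxred.
From mathcomp.real_closed Require Import complex.
From mathcomp Require Import zify ring.
Import Order.TTheory GRing.Theory Num.Theory.
Local Open Scope ring_scope.
Set Implicit Arguments. Unset Strict Implicit. Unset Printing Implicit Defensive.

Section Spec.
Variable R : realType.
Notation C := (R[i]).
Notation emb := (real_complex R).
Local Notation cx A := (map_mx emb A).

Lemma emb_real (x : R) : emb x \is Num.real.
Proof.
rewrite realE ler0c -oppr_ge0 -rmorphN ler0c oppr_ge0.
by have := num_real x; rewrite realE.
Qed.

Lemma emb_inj : injective emb.
Proof. exact: complexI. Qed.

Lemma sym_spectral n (N : 'M[R]_n) : N^T = N ->
  exists (U : 'M[C]_n) (r : 'rV[R]_n),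
    U \in unitmx /\ (cx N) = invmx U *m diag_mx (cx r) *m U.
Proof.
move=> Nsym.
have herm : (cx N) \is hermsymmx.
  apply: realsym_hermsym.
    by rewrite qualifE; apply/eqP; rewrite expr0 scale1r map_mx_id // map_trmx Nsym.
  by apply/mxOverP => i j; rewrite mxE emb_real.
have /orthomx_spectralP := hermitian_normalmx herm.
have /mxOverP sreal := hermitian_spectral_diag_real herm.
set P := spectralmx _; set sp := spectral_diag _ => eqN.
exists P, (map_mx (@complex.Re R) sp); split; first exact: spectral_unit.
have -> : cx (map_mx (@complex.Re R) sp) = sp.
  apply/matrixP => i j; rewrite !mxE complexRe.
  by apply/Creal_ReP; apply: sreal.
exact: eqN.
Qed.

Lemma interp_ex (s : seq R) (f : R -> R) :
  exists p : {poly R}, forall x, x \in s -> p.[x] = f x.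
Proof.
elim: s => [|a s [p Hp]]; first by exists 0.
have [ains|anotin] := boolP (a \in s).
  by exists p => x; rewrite inE => /orP[/eqP->|]; [apply: Hp|apply: Hp].
pose q := \prod_(y <- s) ('X - y%:P).
have qa : q.[a] != 0.
  rewrite /q horner_prod big_seq; apply: (big_ind (fun x => x != 0)).
  - exact: oner_neq0.
  - by move=> u v; apply: mulf_neq0.
  move=> y ys; rewrite hornerXsubC subr_eq0.
  by apply: contraNneq anotin => ->.
have qy : forall y, y \in s -> q.[y] = 0.
  move=> y ys; apply/rootP; rewrite /q root_prod_XsubC ys //.
exists (p + ((f a - p.[a]) / q.[a]) *: q) => x; rewrite inE => /orP[/eqP->|xs].
  by rewrite hornerD hornerZ mulfVK // addrC subrK.
by rewrite hornerD hornerZ (qy x xs) mulr0 addr0 Hp.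
Qed.

Lemma horner_emb_mx n (p : {poly R}) (N : 'M[R]_n.+1) (U : 'M[C]_n.+1) (r : 'rV[R]_n.+1) :
  U \in unitmx -> cx N = invmx U *m diag_mx (cx r) *m U ->
  cx (horner_mx N p) = invmx U *m diag_mx (cx (map_mx (horner p) r)) *m U.
Proof.
move=> Uu eN.
have -> : cx (map_mx (horner p) r) = map_mx (horner (map_poly emb p)) (cx r).
  by apply/matrixP => i j; rewrite !mxE horner_map.
rewrite -horner_mx_diag -horner_mx_uconjC // -eN.
exact: map_horner_mx.
Qed.



Lemma horner_mx_tr n (A : 'M[R]_n.+1) (p : {poly R}) :
  (horner_mx A p)^T = horner_mx A^T p.
Proof.
elim/poly_ind: p => [|p c IH]; first by rewrite !rmorph0 trmx0.
rewrite !rmorphD !rmorphM /= !horner_mx_X !horner_mx_C linearD /= trmx_mul IH tr_scalar_mx.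
by congr (_ + _); apply: (@comm_mx_horner _ _ A^T A^T).
Qed.

Lemma diag_mxD' (T : pzRingType) m (a b : 'rV[T]_m) :
  diag_mx a + diag_mx b = diag_mx (a + b).
Proof. by apply/matrixP => i j; rewrite !mxE mulrnDl. Qed.

Lemma diag_mxZ' (T : comPzRingType) m (c : T) (a : 'rV[T]_m) :
  c *: diag_mx a = diag_mx (c *: a).
Proof. by apply/matrixP => i j; rewrite !mxE mulrnAr. Qed.

Record fcalc_spec n (N : 'M[R]_n.+1) (r : 'rV[R]_n.+1)
   (F : (R -> R) -> 'M[R]_n.+1) : Prop := FcalcSpec {
  fc_poly : forall f, exists p, F f = horner_mx N p;
  fc_mul : forall f g, F f *m F g = F (fun x => f x * g x);
  fc_add : forall f g, F f + F g = F (fun x => f x + g x);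
  fc_scale : forall c f, c *: F f = F (fun x => c * f x);
  fc_id : F (fun x => x) = N;
  fc_one : F (fun _ => 1) = 1%:M;
  fc_tr : forall f, (F f)^T = F f;
  fc_trace : forall f, \tr (F f) = \sum_i f (r 0 i);
  fc_zero : forall f, F f = 0 <-> forall i, f (r 0 i) = 0;
  fc_ext : forall f g, (forall i, f (r 0 i) = g (r 0 i)) -> F f = F g }.

Lemma fcalc n (N : 'M[R]_n.+1) : N^T = N ->
  exists r F, @fcalc_spec n N r F.
Proof.
move=> Nsym; have [U [r [Uu eN]]] := @sym_spectral _ N Nsym.
pose s := [seq r 0 i | i : 'I_n.+1].
have [pf Hpf] := choice (fun f => interp_ex s f).
pose F f := horner_mx N (pf f).
pose D f := invmx U *m diag_mx (\row_i emb (f (r 0 i))) *m U.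
have FD f : cx (F f) = D f.
  apply: etrans (@horner_emb_mx n (pf f) N U r Uu eN) _.
  have -> : cx (map_mx (horner (pf f)) r) = \row_i emb (f (r 0 i)).
    apply/matrixP => i j; rewrite !mxE (ord1 i) Hpf //.
    by apply/mapP; exists j; rewrite ?mem_enum.
  by [].
have Finj f g : D f = D g -> F f = F g.
  by move=> e; apply: (@map_mx_inj _ _ emb); rewrite !FD.
have Dext f g : (forall i, f (r 0 i) = g (r 0 i)) -> D f = D g.
  move=> e; rewrite /D; congr (_ *m diag_mx _ *m _).
  by apply/matrixP => i j; rewrite !mxE e.
exists r, F; split.
- by move=> f; exists (pf f).
- move=> f g; apply: (@map_mx_inj _ _ emb); rewrite map_mxM !FD /D.
  rewrite -!mulmxA (mulmxA U) mulmxV // mul1mx !mulmxA.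
  congr (_ *m _); rewrite -mulmxA mulmx_diag; congr (_ *m diag_mx _).
  by apply/matrixP => i j; rewrite !mxE rmorphM.
- move=> f g; apply: (@map_mx_inj _ _ emb); rewrite map_mxD !FD /D.
  rewrite -mulmxDl -mulmxDr diag_mxD'; congr (_ *m diag_mx _ *m _).
  by apply/matrixP => i j; rewrite !mxE rmorphD.
- move=> c f; apply: (@map_mx_inj _ _ emb); rewrite map_mxZ !FD /D.
  rewrite scalemxAl scalemxAr diag_mxZ'; congr (_ *m diag_mx _ *m _).
  by apply/matrixP => i j; rewrite !mxE rmorphM.
- apply: (@map_mx_inj _ _ emb); rewrite FD /D.
    rewrite eN; congr (_ *m diag_mx _ *m _).
    by apply/matrixP => i j; rewrite !mxE (ord1 i).
- apply: (@map_mx_inj _ _ emb); rewrite FD /D.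
  rewrite map_mx1.
  have -> : diag_mx (\row_i emb ((fun _ => 1) (r 0 i))) = 1%:M :> 'M[C]_n.+1.
    apply/matrixP => i j; rewrite !mxE rmorph1.
    by case: eqP.
  by rewrite mulmx1 mulVmx.
- by move=> f; rewrite /F horner_mx_tr Nsym.
- move=> f; apply: emb_inj; rewrite -trace_map_mx FD /D mxtrace_mulC mulmxA.
  rewrite mulmxV // mul1mx mxtrace_diag rmorph_sum.
  by apply: eq_bigr => i _; rewrite mxE.
- move=> f; split.
    move=> F0 i; apply: emb_inj; rewrite rmorph0.
    have : D f = 0 by rewrite -FD F0 map_mx0.
    move=> /(congr1 (fun X => U *m X *m invmx U)).
    rewrite /D !mulmxA mulmxV // mul1mx -mulmxA mulmxV // mulmx1 mulmx0 mul0mx.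
    by move=> /matrixP /(_ i i); rewrite !mxE eqxx mulr1n.
  move=> H; apply: (@map_mx_inj _ _ emb); rewrite FD map_mx0 /D.
  have -> : diag_mx (\row_i emb (f (r 0 i))) = 0 :> 'M[C]_n.+1.
    by apply/matrixP => i j; rewrite !mxE H rmorph0 mul0rn.
  by rewrite mulmx0 mul0mx.
- by move=> f g e; apply: Finj; apply: Dext.
Qed.

End Spec.

Section Real.
Variable R : realType.

Lemma rv_sq_ge0 m (u : 'rV[R]_m) : 0 <= (u *m u^T) 0 0.
Proof.
rewrite !mxE; apply: sumr_ge0 => j _; rewrite mxE; by rewrite -expr2 sqr_ge0.
Qed.

Lemma rv_sq_eq0 m (u : 'rV[R]_m) : (u *m u^T) 0 0 = 0 -> u = 0.
Proof.
rewrite !mxE => H; apply/rowP => j; rewrite mxE.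
have /psumr_eq0P H2 : forall i : 'I_m, true -> 0 <= u 0 i * u^T i 0.
  by move=> i _; rewrite mxE; by rewrite -expr2 sqr_ge0.
have := H2 H j isT; rewrite mxE.
by move/eqP; rewrite mulf_eq0 orbb => /eqP.
Qed.

Lemma mx_diag_row m k (A : 'M[R]_(m, k)) (B : 'M[R]_(k, m)) i :
  (A *m B) i i = (row i A *m col i B) 0 0.
Proof. by rewrite !mxE; apply: eq_bigr => j _; rewrite !mxE. Qed.

Lemma trace_quad m k (X : 'M[R]_(m, k)) (P : 'M[R]_k) :
  \tr (X *m P *m X^T) = \sum_i (row i X *m P *m (row i X)^T) 0 0.
Proof.
rewrite /mxtrace; apply: eq_bigr => i _.
by rewrite (mx_diag_row (X *m P)) row_mul tr_row.
Qed.

Lemma psd_sym m (A : 'M[R]_m) : psd A -> A^T = A.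
Proof. by case. Qed.

Lemma pd_sym m (A : 'M[R]_m) : pd A -> A^T = A.
Proof. by case. Qed.

Lemma pd_psd m (A : 'M[R]_m) : pd A -> psd A.
Proof.
case=> sA pA; split => // v; have [->|v0] := eqVneq v 0.
  by rewrite !mul0mx mxE.
exact: ltW (pA v v0).
Qed.

Lemma trace_quad_ge0 m k (X : 'M[R]_(m, k)) (P : 'M[R]_k) :
  psd P -> 0 <= \tr (X *m P *m X^T).
Proof.
by case=> _ pP; rewrite trace_quad; apply: sumr_ge0 => i _; apply: pP.
Qed.

Lemma nz_row_exists m k (X : 'M[R]_(m, k)) : X != 0 -> exists i, row i X != 0.
Proof.
move=> X0; apply/not_existsP => H; move/eqP: X0; apply.
apply/row_matrixP => i; rewrite row0; apply/eqP.
by apply: contrapT => Hi; apply: (H i); apply/negP.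
Qed.

Lemma trace_quad_gt0 m k (X : 'M[R]_(m, k)) (P : 'M[R]_k) :
  pd P -> X != 0 -> 0 < \tr (X *m P *m X^T).
Proof.
case=> sP pP X0; have [i Xi] := nz_row_exists X0.
rewrite trace_quad (bigD1 i) //=; apply: ltr_pwDl; first exact: pP.
apply: sumr_ge0 => j _; have [->|v0] := eqVneq (row j X) 0.
  by rewrite !mul0mx mxE.
exact: ltW (pP _ v0).
Qed.

Lemma sum_lt0 m (G : 'I_m -> R) k : (forall i, G i <= 0) -> G k < 0 ->
  \sum_i G i < 0.
Proof.
move=> H Hk; rewrite (bigD1 k) //=.
have : \sum_(i | i != k) G i <= 0 by apply: sumr_le0 => i _.
move: Hk; set a := G k; set b := \sum_(_ | _) _ => ha hb.
by rewrite -(addr0 0) ltr_leD.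
Qed.

End Real.

Section FC.
Variable R : realType.
Variable n : nat.
Variables (N : 'M[R]_n.+1) (r : 'rV[R]_n.+1) (F : (R -> R) -> 'M[R]_n.+1).
Hypothesis HF : fcalc_spec N r F.

Lemma fc_psdf f : (forall i, 0 <= f (r 0 i)) -> psd (F f).
Proof.
move=> Hf; set s := F (fun x => Num.sqrt (f x)).
have sN : s *m s = F f.
  rewrite /s (fc_mul HF); apply: (fc_ext HF) => i /=.
  by rewrite -expr2 sqr_sqrtr ?Hf.
rewrite /psd; split; first exact: (fc_tr HF).
move=> v; have sT : s^T = s := fc_tr HF _.
rewrite -sN -{2}sT mulmxA -mulmxA -trmx_mul.
exact: rv_sq_ge0.
Qed.

Lemma fc_pdf f : (forall i, 0 < f (r 0 i)) -> pd (F f).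
Proof.
move=> Hf; set s := F (fun x => Num.sqrt (f x)).
have sN : s *m s = F f.
  rewrite /s (fc_mul HF); apply: (fc_ext HF) => i /=.
  by rewrite -expr2 sqr_sqrtr // ltW.
have st : s *m F (fun x => (Num.sqrt (f x))^-1) = 1%:M.
  rewrite /s (fc_mul HF) -(fc_one HF); apply: (fc_ext HF) => i /=.
  by rewrite mulfV // gt_eqF // sqrtr_gt0.
rewrite /pd; split; first exact: (fc_tr HF).
move=> v v0; have sT : s^T = s := fc_tr HF _.
rewrite -sN -{2}sT mulmxA -mulmxA -trmx_mul.
rewrite lt_def rv_sq_ge0 andbT; apply/eqP => /rv_sq_eq0 vs.
by move/eqP: v0; apply; rewrite -[v]mulmx1 -st mulmxA vs mul0mx.
Qed.

Lemma fc_nonneg : (forall f, 0 <= \tr (N *m F f *m F f)) -> forall i, 0 <= r 0 i.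
Proof.
move=> H i; rewrite leNgt; apply/negP => ri.
pose e (x : R) : R := if x < 0 then 1 else 0.
have := H e; rewrite -{1}(fc_id HF) !(fc_mul HF) (fc_trace HF).
apply/negP; rewrite -ltNge; apply: (@sum_lt0 _ _ _ i).
  by move=> j; rewrite /e; case: ifP => [/ltW|]; rewrite ?mulr1 ?mulr0.
by rewrite /e ri !mulr1.
Qed.

Lemma fc_posv : (forall f, F f != 0 -> 0 < \tr (N *m F f *m F f)) ->
  forall i, 0 < r 0 i.
Proof.
move=> H i; rewrite ltNge; apply/negP => ri.
pose e (x : R) : R := if x <= 0 then 1 else 0.
have : F e != 0.
  apply/eqP => /(fc_zero HF) /(_ i); rewrite /e ri => /eqP.
  by rewrite oner_eq0.
move=> /H; rewrite -{1}(fc_id HF) !(fc_mul HF) (fc_trace HF).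
apply/negP; rewrite -leNgt; apply: sumr_le0 => j _.
by rewrite /e; case: ifP; rewrite ?mulr1 ?mulr0.
Qed.

End FC.

Section Apps.
Variable R : realType.
Variable n : nat.

Lemma psd_of_trace (N : 'M[R]_n.+1) : N^T = N ->
  (forall p, 0 <= \tr (N *m horner_mx N p *m horner_mx N p)) -> psd N.
Proof.
move=> sN H; have [r [F HF]] := fcalc sN.
rewrite -(fc_id HF); apply: (fc_psdf HF); apply: (fc_nonneg HF) => f.
by have [p ->] := fc_poly HF f.
Qed.

Lemma pd_of_trace (N : 'M[R]_n.+1) : N^T = N ->
  (forall p, horner_mx N p != 0 ->
     0 < \tr (N *m horner_mx N p *m horner_mx N p)) -> pd N.
Proof.
move=> sN H; have [r [F HF]] := fcalc sN.
rewrite -(fc_id HF); apply: (fc_pdf HF); apply: (fc_posv HF) => f.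
by have [p ->] := fc_poly HF f; apply: H.
Qed.

Lemma pd_spec (N : 'M[R]_n.+1) r F : fcalc_spec N r F -> pd N -> forall i, 0 < r 0 i.
Proof.
move=> HF [sN pN]; apply: (fc_posv HF) => f f0.
rewrite mxtrace_mulC mulmxA -{2}(fc_tr HF f).
by apply: trace_quad_gt0.
Qed.

Lemma pd_sqrt (N : 'M[R]_n.+1) : pd N ->
  exists H, [/\ pd H, H *m H = N & exists p, H = horner_mx N p].
Proof.
move=> pN; have [r [F HF]] := fcalc (pd_sym pN).
have rp := pd_spec HF pN.
exists (F (fun x => Num.sqrt x)); split.
- by apply: (fc_pdf HF) => i; rewrite sqrtr_gt0.
- rewrite (fc_mul HF) -(fc_id HF); apply: (fc_ext HF) => i /=.
  by rewrite -expr2 sqr_sqrtr // ltW.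
- exact: (fc_poly HF).
Qed.

Lemma pd_inv_poly (N : 'M[R]_n.+1) : pd N ->
  N \in unitmx /\ exists p, invmx N = horner_mx N p.
Proof.
move=> pN; have [r [F HF]] := fcalc (pd_sym pN).
have rp := pd_spec HF pN.
have NF : N *m F (fun x => x^-1) = 1%:M.
  rewrite -{1}(fc_id HF) (fc_mul HF) -(fc_one HF); apply: (fc_ext HF) => i /=.
  by rewrite mulfV // gt_eqF.
have Nu : N \in unitmx by case: (mulmx1_unit NF).
split => //; have [p Hp] := fc_poly HF (fun x => x^-1); exists p.
by rewrite -Hp -[LHS]mulmx1 -NF mulKmx.
Qed.

End Apps.

Section SM.
Variable R : realType.
Variable n : nat.

Lemma sqrt_mono (A B : 'M[R]_n.+1) : pd A -> pd B ->
  psd (B *m B - A *m A) -> psd (B - A).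
Proof.
move=> pA pB pY.
have sC : (B - A)^T = B - A by rewrite linearB /= (pd_sym pA) (pd_sym pB).
have [r [F HF]] := fcalc sC.
rewrite -(fc_id HF); apply: (fc_psdf HF) => i.
rewrite leNgt; apply/negP => ri.
pose e (x : R) : R := if x < 0 then 1 else 0.
pose g (x : R) : R := Num.sqrt (- x * e x).
set C := B - A; set E := F e; set G := F g.
have ET : E^T = E := fc_tr HF e.
have GT : G^T = G := fc_tr HF g.
have G0 : G != 0.
  apply/eqP => /(fc_zero HF) /(_ i); rewrite /g /e ri mulr1 => /eqP.
  by apply/negP; rewrite gt_eqF // sqrtr_gt0 oppr_gt0.
have gg x : - (g x * g x) = x * e x.
  rewrite -expr2 sqr_sqrtr ?mulNr ?opprK //.
  by rewrite /e; case: ifP => [x0|_]; rewrite ?mulr1 ?mulr0 ?oppr_ge0 // ltW.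
have CE : C *m E = - (G *m G).
  rewrite -scaleN1r /C -(fc_id HF) (fc_mul HF) (fc_mul HF) (fc_scale HF).
  by apply: (fc_ext HF) => j /=; rewrite mulN1r gg.
have EC : E *m C = - (G *m G).
  rewrite -scaleN1r /C -(fc_id HF) (fc_mul HF) (fc_mul HF) (fc_scale HF).
  by apply: (fc_ext HF) => j /=; rewrite mulN1r gg mulrC.
have EE : E *m E = E.
  rewrite /E (fc_mul HF); apply: (fc_ext HF) => j /=.
  by rewrite /e; case: ifP; rewrite ?mulr1 ?mulr0.
have key : B *m B - A *m A = B *m C + C *m A.
  by rewrite /C mulmxBr mulmxBl addrA subrK.
have tG X : \tr (- (G *m G) *m X) = - \tr (G *m X *m G^T).
  by rewrite mulNmx raddfN /= GT (mxtrace_mulC (G *m X) G) mulmxA.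
have t1 : \tr (E *m (B *m C) *m E) = - \tr (G *m B *m G^T).
  rewrite (mxtrace_mulC (E *m (B *m C)) E) !mulmxA EE.
  by rewrite (mxtrace_mulC (E *m B) C) mulmxA CE tG.
have t2 : \tr (E *m (C *m A) *m E) = - \tr (G *m A *m G^T).
  rewrite (mxtrace_mulC (E *m (C *m A)) E) !mulmxA EE.
  by rewrite EC tG.
have := trace_quad_ge0 E pY.
rewrite ET key mulmxDr mulmxDl raddfD /= t1 t2.
apply/negP; rewrite -ltNge -opprD oppr_lt0.
by apply: addr_gt0; apply: trace_quad_gt0.
Qed.

End SM.

Section Proj.
Variable R : realType.
Variable k : nat.
Variable P : 'rV[R]_k -> Prop.
Hypothesis P0 : P 0.
Hypothesis Plin : forall (a : R) u v, P u -> P v -> P (a *: u + v).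

Lemma PZ a u : P u -> P (a *: u).
Proof. by move=> Pu; rewrite -[_ *: u]addr0; apply: Plin. Qed.

Lemma PD u v : P u -> P v -> P (u + v).
Proof. by move=> Pu Pv; rewrite -[u]scale1r; apply: Plin. Qed.

Definition spanP p (B : 'M[R]_(p, k)) := forall u : 'rV_p, P (u *m B).

Lemma basis_ind t : forall p (B : 'M[R]_(p, k)), spanP B -> (k - \rank B <= t)%N ->
  exists p' (B' : 'M[R]_(p', k)), spanP B' /\ forall x, P x -> (x <= B')%MS.
Proof.
elim: t => [|t IH] p B sB ht.
  exists p, B; split => // x _.
  have : \rank B = k by apply/eqP; rewrite eqn_leq rank_leq_col -subn_eq0 -leqn0.
  by move=> rB; apply: submx_full; rewrite /row_full rB.
have [H|] := pselect (forall x, P x -> (x <= B)%MS).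
  by exists p, B.
move=> /existsNP [x /not_implyP [Px xB]].
have sB' : spanP (col_mx B x).
  move=> u; rewrite -[u]hsubmxK mul_row_col [rsubmx u]mx11_scalar mul_scalar_mx.
  by rewrite addrC; apply: Plin.
apply: (IH _ _ sB').
have lt : (\rank B < \rank (col_mx B x))%N.
  rewrite -addsmxE; have := mxrank_leqif_sup (addsmxSl B x).
  move=> /leqifP; case: ifP => //; rewrite addsmx_sub => /andP [_ xB'].
  by exfalso; apply: xB.
have := rank_leq_col (col_mx B x); move: ht; lia.
Qed.

Lemma basis_ex : exists p (B : 'M[R]_(p, k)), spanP B /\ forall x, P x -> (x <= B)%MS.
Proof.
apply: (@basis_ind k 0 0); last by rewrite leq_subr.
by move=> u; rewrite mulmx0.
Qed.

Lemma proj_rv (m : 'rV[R]_k) :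
  exists y, P y /\ forall x, P x -> ((m - y) *m x^T) 0 0 = 0.
Proof.
have [p [B [sB Bsp]]] := basis_ex.
move: (row_base_free B) (eq_row_base B); move: (row_base B) => Bf freeB eqB.
pose G := Bf *m Bf^T.
have Gu : G \in unitmx.
  rewrite unitmxE unitfE; apply/negP => /det0P [w w0 wG].
  move/negP: w0; apply; rewrite -(mulmx_free_eq0 _ freeB).
  apply/eqP/rv_sq_eq0; rewrite trmx_mul !mulmxA.
  have : (w *m G *m w^T) 0 0 = 0 by rewrite wG mul0mx mxE.
  by rewrite /G !mulmxA.
exists (m *m Bf^T *m invmx G *m Bf); split.
  have : (m *m Bf^T *m invmx G *m Bf <= B)%MS.
    by apply: submx_trans (submxMl _ _) _; rewrite eqB.
  by move/submxP => [D ->]; apply: sB.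
move=> x /Bsp; rewrite -eqB => /submxP [D ->].
rewrite trmx_mul mulmxA mulmxBl -!mulmxA.
by rewrite -/G mulVmx // mulmx1 subrr mul0mx mxE.
Qed.

End Proj.

Section Dot.
Variable R : realType.

Lemma trace_mxvec m n (X Y : 'M[R]_(m, n)) :
  \tr (X^T *m Y) = (mxvec X *m (mxvec Y)^T) 0 0.
Proof.
rewrite mxE (reindex (uncurry (@mxvec_index m n))); last exact: curry_mxvec_bij.
rewrite /mxtrace (eq_bigr (fun j => \sum_i X i j * Y i j)); last first.
  by move=> j _; rewrite mxE; apply: eq_bigr => i _; rewrite mxE.
rewrite exchange_big pair_bigA /=; apply: eq_bigr => -[i j] _ /=.
by rewrite !mxE !mxvecE.
Qed.

End Dot.

Section Main.
Variables (R : realType) (n : nat) (K : 'M[R]_n.+1 -> Prop).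
Hypothesis HK : matrix_algebra_set K.

Lemma KZ c A : K A -> K (c *: A). Proof. by case: HK => H _ _ _; apply: H. Qed.
Lemma KD A B : K A -> K B -> K (A + B). Proof. by case: HK => _ H _ _; apply: H. Qed.
Lemma KM A B : K A -> K B -> K (A *m B). Proof. by case: HK => _ _ H _; apply: H. Qed.
Lemma K1 : K 1%:M. Proof. by case: HK. Qed.
Lemma K0 : K 0. Proof. by rewrite -(scale0r 1%:M); apply: KZ; apply: K1. Qed.

Lemma Kpoly X p : K X -> K (horner_mx X p).
Proof.
move=> KX; elim/poly_ind: p => [|p c IH]; first by rewrite rmorph0; apply: K0.
rewrite rmorphD rmorphM /= horner_mx_X horner_mx_C.
by apply: KD; [apply: KM | rewrite -scalemx1; apply: KZ; apply: K1].
Qed.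

Definition Sset (X : 'M[R]_n.+1) := K X /\ X^T = X.

Lemma Spoly X p : Sset X -> Sset (horner_mx X p).
Proof. by case=> KX sX; split; [apply: Kpoly | rewrite horner_mx_tr sX]. Qed.

Lemma Ssq X : Sset X -> Sset (X *m X).
Proof. by case=> KX sX; split; [apply: KM | rewrite trmx_mul sX]. Qed.

Lemma Slin a X Y : Sset X -> Sset Y -> Sset (a *: X + Y).
Proof.
case=> KX sX [KY sY]; split; first by apply: KD => //; apply: KZ.
by rewrite linearD linearZ /= sX sY.
Qed.

Lemma S0 : Sset 0. Proof. by split; [apply: K0 | rewrite trmx0]. Qed.

Definition isProj (A N : 'M[R]_n.+1) :=
  Sset N /\ forall X, Sset X -> \tr ((A - N)^T *m X) = 0.

Lemma proj_ex A : exists N, isProj A N.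
Proof.
pose P (v : 'rV[R]_(n.+1 * n.+1)) := Sset (vec_mx v).
have P0 : P 0 by rewrite /P linear0; apply: S0.
have Plin : forall a u v, P u -> P v -> P (a *: u + v).
  by move=> a u v Pu Pv; rewrite /P linearP; apply: Slin.
have [y [Py Hy]] := proj_rv P0 Plin (mxvec A).
exists (vec_mx y); split => // X SX.
rewrite trace_mxvec linearB /= vec_mxK; apply: Hy.
by rewrite /P mxvecK.
Qed.

Lemma pd1 : pd (1%:M : 'M[R]_n.+1).
Proof.
split; first exact: trmx1.
move=> v v0; rewrite mulmx1 lt_def rv_sq_ge0 andbT.
by apply/eqP => /rv_sq_eq0 v00; move/eqP: v0.
Qed.

Lemma proj_uniq A N1 N2 : isProj A N1 -> isProj A N2 -> N1 = N2.
Proof.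
move=> [SN1 H1] [SN2 H2]; apply/eqP; rewrite -subr_eq0; apply/eqP.
have SY : Sset (N1 - N2) by rewrite -scaleN1r addrC; apply: Slin.
have := H2 _ SY; have := H1 _ SY.
move=> e1 e2; have : \tr ((N1 - N2)^T *m (N1 - N2)) = 0.
  have -> : (N1 - N2)^T = (A - N2)^T - (A - N1)^T.
    by rewrite -linearB /= [in RHS]opprB [in RHS]addrCA [in RHS]addrAC subrr add0r.
  by rewrite mulmxBl raddfB /= e1 e2 subrr.
rewrite mxtrace_mulC => e.
apply/eqP; apply: contraT => Y0.
by have := trace_quad_gt0 pd1 Y0; rewrite mulmx1 e ltxx.
Qed.

Lemma proj_tr A N X : isProj A N -> A^T = A -> Sset X -> \tr (N *m X) = \tr (A *m X).
Proof.
move=> [[_ sN] H] sA SX; have := H _ SX.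
rewrite linearB /= sA sN mulmxBl raddfB /= => /eqP; rewrite subr_eq0 => /eqP.
by move=> ->.
Qed.

Lemma proj_add A1 A2 N1 N2 : isProj A1 N1 -> isProj A2 N2 ->
  isProj (A1 + A2) (N1 + N2).
Proof.
move=> [SN1 H1] [SN2 H2]; split.
  by rewrite -[N1]scale1r; apply: Slin.
move=> X SX; rewrite opprD addrACA linearD /= mulmxDl raddfD /=.
by rewrite H1 // H2 // addr0.
Qed.

Lemma proj_scale c A N : isProj A N -> isProj (c *: A) (c *: N).
Proof.
move=> [SN H]; split.
  by rewrite -[_ *: N]addr0; apply: Slin => //; apply: S0.
move=> X SX; rewrite -scalerBr linearZ /= -scalemxAl mxtraceZ H //.
by rewrite mulr0.
Qed.

Lemma proj_sub A1 A2 N1 N2 : isProj A1 N1 -> isProj A2 N2 ->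
  isProj (A2 - A1) (N2 - N1).
Proof.
move=> P1 P2; rewrite -!scaleN1r; apply: proj_add => //.
exact: proj_scale.
Qed.

Lemma proj_psd A N : psd A -> isProj A N -> psd N.
Proof.
move=> pA PN; have [[KN sN] _] := PN.
apply: psd_of_trace => // p.
have SX : Sset (horner_mx N p) by apply: Spoly.
set X := horner_mx N p in SX *.
rewrite -mulmxA (proj_tr PN (psd_sym pA) (Ssq SX)).
rewrite mulmxA (mxtrace_mulC (A *m X) X) mulmxA -{2}(proj2 SX).
exact: trace_quad_ge0.
Qed.

Lemma proj_pd A N : pd A -> isProj A N -> pd N.
Proof.
move=> pA PN; have [[KN sN] _] := PN.
apply: pd_of_trace => // p.
have SX : Sset (horner_mx N p) by apply: Spoly.
set X := horner_mx N p in SX *.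
move=> X0.
rewrite -mulmxA (proj_tr PN (pd_sym pA) (Ssq SX)).
rewrite mulmxA (mxtrace_mulC (A *m X) X) mulmxA -{2}(proj2 SX).
exact: trace_quad_gt0.
Qed.

Lemma pd_inv_pd (H : 'M[R]_n.+1) : pd H -> pd (invmx H).
Proof.
move=> pH; have [Hu _] := pd_inv_poly pH; case: pH => sH pH.
split; first by rewrite trmx_inv sH.
move=> v v0; set w := v *m invmx H.
have w0 : w != 0.
  apply: contraNneq v0 => w0; rewrite -[v]mulmx1 -(mulVmx Hu) mulmxA -/w w0.
  by rewrite mul0mx.
have := pH w w0; rewrite {1}/w -(mulmxA v) mulVmx // mulmx1 /w trmx_mul.
by rewrite trmx_inv sH mulmxA.
Qed.

Lemma S_inv H : Sset H -> pd H -> Sset (invmx H).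
Proof.
move=> SH pH; have [_ [p ->]] := pd_inv_poly pH.
exact: Spoly.
Qed.

Lemma PH_proj A : pd A -> pd (PH K A) /\ isProj A (PH K A *m PH K A).
Proof.
move=> pA; have [N PN] := proj_ex A; have pN := proj_pd pA PN.
have [[KN sN] _] := PN.
have [H0 [pH0 H0N [p H0p]]] := pd_sqrt pN.
have SH0 : Sset H0 by rewrite H0p; apply: Spoly.
have objE H : Sset H -> pd H ->
    precond_obj A H = \tr (N *m invmx H) + \tr H.
  move=> SH pH; rewrite /precond_obj /frob (pd_sym pA).
  by rewrite (proj_tr PN (pd_sym pA) (S_inv SH pH)).
have [H0u _] := pd_inv_poly pH0.
have obj0 : precond_obj A H0 = \tr H0 + \tr H0.
  by rewrite objE // -H0N -mulmxA mulmxV // mulmx1.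
have ineq H : Sset H -> pd H ->
    precond_obj A H = precond_obj A H0 + \tr ((H0 - H) *m invmx H *m (H0 - H)^T).
  move=> SH pH; have [Hu _] := pd_inv_poly pH.
  rewrite objE // obj0 linearB /= (pd_sym pH0) (pd_sym pH).
  rewrite mulmxBl mulmxV // mulmxBl mul1mx mulmxBr -(mulmxA H0 (invmx H) H) mulVmx // mulmx1.
  rewrite !raddfB /= (mxtrace_mulC (H0 *m invmx H) H0) mulmxA H0N.
  by ring.
have isPH0 : is_PH K A H0.
  split; first by split => //; split => //; [exact: pd_psd | case: SH0].
  move=> H' [psH' KH'] pH'; have SH' : Sset H' by split => //; case: psH'.
  rewrite (ineq H') // lerDl; apply: trace_quad_ge0.
  exact/pd_psd/pd_inv_pd.
have uniq H : is_PH K A H -> H = H0.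
  move=> [[[psH KH] pH] Hmin]; have SH : Sset H by split => //; case: psH.
  have := Hmin _ (conj (pd_psd pH0) (proj1 SH0)) pH0.
  rewrite (ineq H) // gerDl => le0.
  apply/eqP; rewrite eq_sym -subr_eq0; apply: contraTT le0 => nz.
  by rewrite -ltNge; apply: trace_quad_gt0 => //; apply: pd_inv_pd.
have -> : PH K A = H0 by apply: xget_unique.
by split => //; rewrite H0N.
Qed.

End Main.

Lemma pd_add {R : realType} {m} {A B : 'M[R]_m} : pd A -> pd B -> pd (A + B).
Proof.
move=> [sA pA] [sB pB]; split; first by rewrite linearD /= sA sB.
by move=> v v0; rewrite mulmxDr mulmxDl mxE addr_gt0 // ?pA ?pB.
Qed.

Lemma pd_scale {R : realType} {m} {c : R} {A : 'M[R]_m} : 0 < c -> pd A -> pd (c *: A).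
Proof.
move=> c0 [sA pA]; split; first by rewrite linearZ /= sA.
by move=> v v0; rewrite -scalemxAr -scalemxAl mxE mulr_gt0 // pA.
Qed.

Unset Implicit Arguments.

Theorem lemmaA3 (R : realType) (d : nat) (K : 'M[R]_d -> Prop) :
  matrix_algebra_set K ->
  [/\ (forall M1 M2 : 'M[R]_d, pd M1 -> pd M2 ->
         PH K (M1 + M2) *m PH K (M1 + M2) =
         PH K M1 *m PH K M1 + PH K M2 *m PH K M2),
      (forall (M : 'M[R]_d) (c : R), pd M -> 0 < c ->
         PH K (c *: M) *m PH K (c *: M) = c *: (PH K M *m PH K M))
    & (forall A B : 'M[R]_d, pd A -> pd B -> loewner_le A B ->
         loewner_le (PH K A) (PH K B))].
Proof.
case: d K => [|n] K HK.
  split.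
  - by move=> *; apply/matrixP => -[].
  - by move=> *; apply/matrixP => -[].
  - move=> *; split; first by apply/matrixP => -[].
    by move=> v; rewrite !mxE big_ord0.
split.
- move=> M1 M2 p1 p2.
  have [_ P1] := PH_proj HK p1; have [_ P2] := PH_proj HK p2.
  have [_ P12] := PH_proj HK (pd_add p1 p2).
  exact: (proj_uniq HK P12 (proj_add HK P1 P2)).
- move=> M c pM c0.
  have [_ P1] := PH_proj HK pM; have [_ P2] := PH_proj HK (pd_scale c0 pM).
  exact: (proj_uniq HK P2 (proj_scale HK c P1)).
- move=> A B pA pB lAB.
  have [pPA PA] := PH_proj HK pA; have [pPB PB] := PH_proj HK pB.
  have := proj_psd HK lAB (proj_sub HK PA PB).
  exact: sqrt_mono.
Qed.
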